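(* Let $g,f$ be constraints such that $f$ is non-trivial and $\deg(g)\le\deg(f)$. Then there exist $M$, constraints $f_1,\dots,f_M$ each expressible by $f$ with constants, index tuples $(j_i^1,\dots,j_i^{\mathrm{ar}(f_i)})$ with entries in $[\mathrm{ar}(g)]$, and rationals $\alpha_1,\dots,\alpha_M\in\mathbb{Q}$ such that for all $x\in\{0,1\}^{\mathrm{ar}(g)}$, $$g(x_1,\dots,x_{\mathrm{ar}(g)})=\sum_{i=1}^M\alpha_i\cdot f_i(x_{j_i^1},\dots,x_{j_i^{\mathrm{ar}(f_i)}}).$$
   Context: A $k$-ary constraint is $f\colon\{0,1\}^k\to\{0,1\}$ ($k=\mathrm{ar}(f)$), trivial if it is constant. Its characteristic polynomial $P_f$ is the unique multilinear polynomial over $\mathbb{R}$ in $k$ variables with $P_f(x)=f(x)$ for all $x\in\{0,1\}^k$; $\deg(f)=\deg(P_f)$. A $d$-ary constraint $h$ is expressible by $f$ with constants if $h(x_1,\dots,x_d)=f(\xi_1,\dots,\xi_k)$ identically, where each $\xi_j$ is either a variable $x_i$ for some $i\in[d]$ or one of the constants $0,1$. *)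

(* Defs.v *)
From mathcomp Require Import all_boot all_order all_algebra.
Set Implicit Arguments. Unset Strict Implicit. Unset Printing Implicit Defensive.
Import Order.TTheory GRing.Theory Num.Theory.
Local Open Scope ring_scope.

Definition constraint (k : nat) := ('I_k -> bool) -> bool.

Definition nontrivial k (f : constraint k) : Prop := exists x y, f x != f y.

(* A multilinear polynomial in k variables, given by its coefficient family
   c : {set 'I_k} -> rat, i.e. P(x) = \sum_S c_S \prod_{i in S} x_i. *)
Definition mlpoly (k : nat) := {set 'I_k} -> rat.

Definition mleval k (P : mlpoly k) (x : 'I_k -> bool) : rat :=
  \sum_(S : {set 'I_k}) P S * \prod_(i in S) ((x i)%:R : rat).

(* P is the characteristic polynomial of f: it agrees with f on {0,1}^k
   (such a multilinear P exists and is unique). *)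
Definition is_char_poly k (f : constraint k) (P : mlpoly k) : Prop :=
  forall x, mleval P x = (f x)%:R.

(* total degree of a multilinear polynomial (0 for the zero polynomial) *)
Definition mldeg k (P : mlpoly k) : nat :=
  \max_(S : {set 'I_k} | P S != 0) #|S|.

Definition deg_le k l (g : constraint k) (f : constraint l) : Prop :=
  forall Pg Pf, is_char_poly g Pg -> is_char_poly f Pf -> (mldeg Pg <= mldeg Pf)%N.

Definition expressible d k (h : constraint d) (f : constraint k) : Prop :=
  exists xi : 'I_k -> 'I_d + bool,
    forall x : 'I_d -> bool,
      h x = f (fun j => match xi j with inl i => x i | inr b => b end).

(* Main.v *)
Require Import Defs.
From mathcomp Require Import all_boot all_order all_algebra.
From Stdlib Require Import FunctionalExtensionality.
Set Implicit Arguments. Unset Strict Implicit. Unset Printing Implicit Defensive.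
Import GRing.Theory Num.Theory.
Local Open Scope ring_scope.

Definition tog (T : finType) (j : T) (U : {set T}) : {set T} :=
  if j \in U then U :\ j else j |: U.

Lemma togK (T : finType) (j : T) : involutive (tog j).
Proof.
move=> U; rewrite /tog; case: (boolP (j \in U)) => hj.
  by rewrite setD11 setD1K.
by rewrite setU11 setU1K.
Qed.

Lemma sign_tog (T : finType) (j : T) (U : {set T}) :
  (-1) ^+ #|tog j U| = - ((-1) ^+ #|U|) :> rat.
Proof.
rewrite /tog; case: (boolP (j \in U)) => hj.
  by rewrite [in RHS](cardsD1 j U) hj add1n exprS mulN1r opprK.
by rewrite cardsU1 hj add1n exprS mulN1r.
Qed.

Lemma tog_in (T : finType) (j i : T) U :
  (i \in tog j U) = (if i == j then j \notin U else i \in U).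
Proof.
rewrite /tog; case: (boolP (j \in U)) => h; rewrite ?in_setD1 ?in_setU1;
  case: eqP => [->|] //=; by rewrite h.
Qed.

Lemma tog_subl (T : finType) (j : T) (S X : {set T}) :
  j \in X -> (tog j S \subset X) = (S \subset X).
Proof.
move=> hj; apply/subsetP/subsetP => h i; case: (eqVneq i j) => [->|ne] // hi;
  apply: h; move: hi; by rewrite tog_in (negbTE ne).
Qed.

Lemma tog_subr (T : finType) (j : T) (S U : {set T}) :
  j \notin U -> (U \subset tog j S) = (U \subset S).
Proof.
move=> hj; apply/subsetP/subsetP => h i hi; have ne : i != j
  by apply/eqP => e; rewrite -e hi in hj.
  by move: (h i hi); rewrite tog_in (negbTE ne).
by rewrite tog_in (negbTE ne); apply: h.
Qed.

Lemma alt0 (T : finType) (P : pred {set T}) (F : {set T} -> rat) (j : T) :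
  (forall U, P (tog j U) = P U) -> (forall U, F (tog j U) = F U) ->
  \sum_(U | P U) (-1) ^+ #|U| * F U = 0.
Proof.
move=> hP hF.
set S := (X in X = 0).
have hS : S = - S.
  rewrite /S {1}(reindex_inj (can_inj (togK j))) /= -sumrN.
  apply: eq_big => [U|U _]; first by rewrite hP.
    by rewrite sign_tog hF mulNr.
have : S *+ 2 = 0 by rewrite mulr2n {1}hS addNr.
by move/eqP; rewrite mulrn_eq0 /= => /eqP.
Qed.

Lemma prod_ind (m : nat) (x : 'I_m -> bool) (S : {set 'I_m}) :
  \prod_(i in S) ((x i)%:R : rat) = (S \subset [set i | x i])%:R.
Proof.
case: (boolP (S \subset _)) => hS.
  by apply: big1 => i hi; have := subsetP hS i hi; rewrite inE => ->.
have [i hiS hiX] := subsetPn hS.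
by rewrite (bigD1 i) //=; move: hiX; rewrite inE => /negbTE ->; rewrite mul0r.
Qed.

Definition ind (k : nat) (U : {set 'I_k}) : 'I_k -> bool := fun i => i \in U.
Definition mob (k : nat) (f : constraint k) : mlpoly k :=
  fun S => \sum_(U : {set 'I_k} | U \subset S)
             (-1) ^+ (#|S| + #|U|) * ((f (ind U))%:R : rat).

Lemma sign_double n : (-1) ^+ (n + n) = 1 :> rat.
Proof. by rewrite exprD -expr2 -exprM mulnC exprM sqrrN expr1n. Qed.

Lemma mob_char k (f : constraint k) : is_char_poly f (mob f).
Proof.
move=> x; rewrite /mleval.
set X := [set i | x i].
under eq_bigr do rewrite prod_ind.
rewrite (eq_bigr (fun S : {set 'I_k} => if S \subset X then mob f S else 0)); last first.
  by move=> S _; case: (_ \subset X); rewrite ?mulr1 ?mulr0.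
rewrite -big_mkcond /=.
unfold mob => /=; rewrite (exchange_big_dep (fun U : {set 'I_k} => U \subset X)) /=; last first.
  by move=> S U hS hU; apply: subset_trans hU hS.
rewrite (bigD1 X) //= [X in _ + X]big1 ?addr0.
  rewrite (big_pred1 X); last by move=> S; rewrite /= eqEsubset.
  rewrite sign_double mul1r.
  have -> : ind X = x by apply: functional_extensionality => i; rewrite /ind inE.
  by [].
move=> U /andP [hUX hne].
have [j hjX hjU] : exists2 j, j \in X & j \notin U.
  apply/subsetPn; apply: contra hne => h; by rewrite eqEsubset hUX h.
under eq_bigr do rewrite exprD -mulrA.
apply: (alt0 (j := j)) => [S|S] //=.
by rewrite tog_subl // tog_subr.
Qed.

Definition Ex m k (f : constraint k) := {h : constraint m | expressible h f}.
Definition Rep m k (f : constraint k) (h : ('I_m -> bool) -> rat) :=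
  exists s : seq (rat * Ex m f),
    forall x, h x = \sum_(p <- s) p.1 * ((sval p.2 x)%:R : rat).

Lemma Rep_ext m k (f : constraint k) h1 h2 :
  Rep f h1 -> (forall x : 'I_m -> bool, h1 x = h2 x) -> Rep f h2.
Proof. by move=> [s hs] e; exists s => x; rewrite -e hs. Qed.

Lemma Rep0 m k (f : constraint k) : Rep f (fun _ : 'I_m -> bool => 0).
Proof. by exists [::] => x; rewrite big_nil. Qed.

Lemma Rep_add m k (f : constraint k) (h1 h2 : ('I_m -> bool) -> rat) :
  Rep f h1 -> Rep f h2 -> Rep f (fun x => h1 x + h2 x).
Proof. by move=> [s1 e1] [s2 e2]; exists (s1 ++ s2) => x; rewrite big_cat e1 e2. Qed.

Lemma Rep_scale m k (f : constraint k) (c : rat) (h : ('I_m -> bool) -> rat) :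
  Rep f h -> Rep f (fun x => c * h x).
Proof.
move=> [s e]; exists (map (fun p => (c * p.1, p.2)) s) => x.
by rewrite big_map e mulr_sumr; apply: eq_bigr => p _; rewrite /= mulrA.
Qed.

Lemma Rep_one m k (f : constraint k) (h : constraint m) :
  expressible h f -> Rep f (fun x => (h x)%:R).
Proof.
move=> H; exists [:: (1, exist _ h H)] => x.
by rewrite big_seq1 /= mul1r.
Qed.

Lemma Rep_sum m k (f : constraint k) (I : Type) (r : seq I) (P : pred I)
    (F : I -> ('I_m -> bool) -> rat) :
  (forall i, P i -> Rep f (F i)) -> Rep f (fun x => \sum_(i <- r | P i) F i x).
Proof.
move=> H; elim: r => [|i r IH].
  by apply: (Rep_ext (@Rep0 m k f)) => x; rewrite big_nil.
case: (boolP (P i)) => hi.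
  by apply: (Rep_ext (Rep_add (H i hi) IH)) => x; rewrite big_cons hi.
by apply: (Rep_ext IH) => x; rewrite big_cons (negbTE hi).
Qed.

Lemma exists_e m k (S : {set 'I_m}) (T : {set 'I_k}) : (#|S| <= #|T|)%N ->
  exists e : 'I_k -> option 'I_m,
    (forall j s, e j = Some s -> s \in S) /\
    (forall s, s \in S -> exists2 j, j \in T & e j = Some s).
Proof.
move=> hST.
pose sS := map Some (enum S).
exists (fun j => if j \in T then nth None sS (index j (enum T)) else None); split.
  move=> j s; case: (j \in T) => // e.
  have : Some s \in sS.
    rewrite -e; apply: mem_nth; case: ltnP => // h.
    by move: e; rewrite nth_default.
  by case/mapP => s' hs' [->]; rewrite mem_enum in hs'.
move=> s hs.
have hsE : s \in enum S by rewrite mem_enum.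
have hn : (index s (enum S) < #|S|)%N by rewrite cardE index_mem.
have hT : (index s (enum S) < size (enum T))%N by rewrite -cardE; apply: leq_trans hST.
have hk : (0 < k)%N.
  apply: leq_ltn_trans (leq0n _) _; apply: leq_trans hT _.
  by rewrite -cardE; apply: leq_trans (max_card _) _; rewrite card_ord.
pose j0 := Ordinal hk.
exists (nth j0 (enum T) (index s (enum S))).
  by rewrite -mem_enum mem_nth.
have -> : (nth j0 (enum T) (index s (enum S)) \in T) by rewrite -mem_enum mem_nth.
rewrite index_uniq ?enum_uniq // (nth_map s) ?size_map -?cardE //.
by rewrite nth_index.
Qed.

Definition wv m k (e : 'I_k -> option 'I_m) (x : 'I_m -> bool) (j : 'I_k) : bool :=
  match e j with Some s => x s | None => true end.

Lemma monoRep m k (f : constraint k) (T : {set 'I_k}) (S : {set 'I_m})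
    (e : 'I_k -> option 'I_m) :
  (forall j s, e j = Some s -> s \in S) ->
  (forall s, s \in S -> exists2 j, j \in T & e j = Some s) ->
  mob f T != 0 ->
  Rep f (fun x => ((S \subset [set i | x i])%:R : rat)).
Proof.
move=> he1 he2 hc.
pose hU (U : {set 'I_k}) : constraint m := fun x => f (fun j => (j \in U) && wv e x j).
have hex : forall U, expressible (hU U) f.
  move=> U; exists (fun j => if j \in U then
             (match e j with Some s => inl s | None => inr true end) else inr false).
  move=> x; rewrite /hU; congr f; apply: functional_extensionality => j.
  by rewrite /wv; case: (j \in U) => //; case: (e j).
have R := Rep_scale (mob f T)^-1
  (@Rep_sum m k f _ (index_enum _) (fun U : {set 'I_k} => U \subset T)
     (fun U x => (-1) ^+ (#|T| + #|U|) * ((hU U x)%:R : rat))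
     (fun U _ => Rep_scale ((-1) ^+ (#|T| + #|U|)) (Rep_one (hex U)))).
apply: (Rep_ext R) => x /=.
case: (boolP (S \subset [set i | x i])) => hS.
  rewrite /mob in hc *.
  rewrite [X in _ * X](eq_bigr (fun U : {set 'I_k} => (-1) ^+ (#|T| + #|U|) * (f (ind U))%:R)).
    by rewrite mulVf.
  move=> U hUT; congr (_ * (f _)%:R); apply: functional_extensionality => j.
  rewrite /ind /wv; case: (boolP (j \in U)) => //= hj.
  case E: (e j) => [s|] //.
  by have := subsetP hS s (he1 _ _ E); rewrite inE.
have [s hs hxs] := subsetPn hS.
have [j hjT ej] := he2 s hs.
have hw : wv e x j = false by rewrite /wv ej; move: hxs; rewrite inE => /negbTE.
under eq_bigr do rewrite exprD -mulrA.
rewrite -mulr_sumr (@alt0 _ _ _ j) ?mulr0 //.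
  by move=> U; rewrite tog_subl.
move=> U; rewrite /hU; congr (_%:R); congr f; apply: functional_extensionality => i.
rewrite tog_in; case: eqP => [->|] //.
by rewrite hw !andbF.
Qed.

Lemma mldeg_ge k (P : mlpoly k) S : P S != 0 -> (#|S| <= mldeg P)%N.
Proof. by move=> h; rewrite /mldeg; exact: (leq_bigmax_cond (F := fun S : {set 'I_k} => #|S|)). Qed.

Lemma mldeg_attain k (P : mlpoly k) : (0 < mldeg P)%N ->
  exists T, P T != 0 /\ #|T| = mldeg P.
Proof.
rewrite /mldeg; case: (pickP (fun S => P S != 0)) => [T hT|h0]; last first.
  by rewrite big_pred0.
move=> _.
case: (@arg_maxnP _ T (fun S => P S != 0) (fun S : {set 'I_k} => #|S|) hT) => A hA hmax.
exists A; split => //; apply/eqP; rewrite eqn_leq.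
apply/andP; split.
  exact: (leq_bigmax_cond (F := fun S : {set 'I_k} => #|S|) A hA).
by apply/bigmax_leqP => S hS; apply: hmax.
Qed.

Theorem proposition16 (m k : nat) (g : constraint m) (f : constraint k) :
  nontrivial f -> deg_le g f ->
  exists (M : nat) (ar : 'I_M -> nat)
         (fs : forall i : 'I_M, constraint (ar i))
         (js : forall i : 'I_M, 'I_(ar i) -> 'I_m)
         (alpha : 'I_M -> rat),
    (forall i, expressible (fs i) f) /\
    forall x : 'I_m -> bool,
      ((g x)%:R : rat) = \sum_(i < M) alpha i * ((fs i (fun t => x (js i t)))%:R : rat).
Proof.
move=> [a [b hab]] hdeg.
have hd := hdeg _ _ (mob_char g) (mob_char f).
have [z hz] : exists z, f z = true.
  by case Ea: (f a); [exists a | exists b; move: hab; rewrite Ea; case: (f b)].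
have R1 : Rep f (fun _ : 'I_m -> bool => 1).
  have H : expressible (fun _ : 'I_m -> bool => f z) f.
    by exists (fun j => inr (z j)).
  by apply: (Rep_ext (Rep_one H)) => x; rewrite hz.
have RG : Rep f (fun x => ((g x)%:R : rat)).
  apply: (Rep_ext (@Rep_sum m k f _ (index_enum _) xpredT
      (fun S x => mob g S * ((S \subset [set i | x i])%:R : rat)) _)).
  move=> S _.
  case: (eqVneq (mob g S) 0) => hS.
    by apply: (Rep_ext (@Rep0 m k f)) => x; rewrite hS mul0r.
  apply: Rep_scale.
  case: (eqVneq S set0) => hS0.
    by apply: (Rep_ext R1) => x; rewrite hS0 sub0set.
  have hSpos : (0 < #|S|)%N by rewrite card_gt0.
  have hSle := leq_trans (mldeg_ge hS) hd.
  have [T [hT hTc]] := mldeg_attain (leq_trans hSpos hSle).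
  have hle : (#|S| <= #|T|)%N by rewrite hTc.
  have [e [he1 he2]] := exists_e hle.
  exact: (monoRep he1 he2 hT).
  move=> x; rewrite -(mob_char g x) /mleval; apply: eq_bigr => S _.
  by rewrite prod_ind.
case: RG => s hs.
have dex : expressible (fun _ : 'I_m -> bool => f (fun _ => false)) f.
  by exists (fun _ => inr false).
pose d : rat * Ex m f := (0, exist (fun h => expressible h f) _ dex).
exists (size s), (fun _ => m), (fun i => sval (nth d s i).2), (fun i t => t),
  (fun i => (nth d s i).1); split.
  by move=> i; exact: (svalP (nth d s i).2).
move=> x; rewrite hs (big_nth d) big_mkord.
by apply: eq_bigr.
Qed.
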